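(* Let $\epsilon>0$, $y\in\mathbb R^d$, and for $i\in[k]$ let $a_i\in\mathbb R^d$ and $b_i>0$. Consider the feasibility problem of finding $\tilde y\in\mathbb R^d$ with $\|\tilde y-y\|_\infty\le\epsilon$ and $\|\tilde y-a_i\|_\infty\ge b_i$ for all $i\in[k]$. For $j\in[d]$ and $t\in\mathbb R$ let $S_j(t)=\{i\in[k]: |t-a_{i,j}|\ge b_i\}$. Then: (1) if $\tilde y$ satisfies $\|\tilde y-y\|_\infty\le\epsilon$ and $\bigcup_{j=1}^d S_j(\tilde y_j)=[k]$, then $\tilde y$ is a solution of the feasibility problem; (2) for $j\in[d]$ let $P_j=\bigcup_{i=1}^k\big(\{a_{i,j}-b_i,\,a_{i,j}+b_i\}\cap[y_j-\epsilon,y_j+\epsilon]\big)$, or $P_j=\{y_j\}$ if this set is empty, and let $P=\{p\in\mathbb R^d: p_j\in P_j \text{ for all } j\in[d]\}$; then if the feasibility problem has a solution, $P$ contains a solution. *)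

(* Defs.v *)
From HB Require Import structures.
From mathcomp Require Import all_boot all_order all_algebra.
From mathcomp Require Import reals.
Set Implicit Arguments. Unset Strict Implicit. Unset Printing Implicit Defensive.
Import Order.TTheory GRing.Theory Num.Theory.
Local Open Scope ring_scope.

Definition infnorm (R : realType) (d : nat) (v : 'rV[R]_d) : R :=
  \big[Num.max/0]_(j < d) `|v ord0 j|.

Definition feasible (R : realType) (d k : nat) (eps : R) (y : 'rV[R]_d)
  (a : 'I_k -> 'rV[R]_d) (b : 'I_k -> R) (yt : 'rV[R]_d) : Prop :=
  infnorm (yt - y) <= eps /\ (forall i : 'I_k, b i <= infnorm (yt - a i)).

Definition Sj (R : realType) (d k : nat) (a : 'I_k -> 'rV[R]_d) (b : 'I_k -> R)
  (j : 'I_d) (t : R) : {set 'I_k} :=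
  [set i | b i <= `|t - a i ord0 j|].

Definition Pj_raw (R : realType) (d k : nat) (eps : R) (y : 'rV[R]_d)
  (a : 'I_k -> 'rV[R]_d) (b : 'I_k -> R) (j : 'I_d) (p : R) : Prop :=
  exists i : 'I_k, (p = a i ord0 j - b i \/ p = a i ord0 j + b i) /\
                   y ord0 j - eps <= p <= y ord0 j + eps.

Definition Pj (R : realType) (d k : nat) (eps : R) (y : 'rV[R]_d)
  (a : 'I_k -> 'rV[R]_d) (b : 'I_k -> R) (j : 'I_d) (p : R) : Prop :=
  Pj_raw eps y a b j p \/
  ((forall q : R, ~ Pj_raw eps y a b j q) /\ p = y ord0 j).

Definition inP (R : realType) (d k : nat) (eps : R) (y : 'rV[R]_d)
  (a : 'I_k -> 'rV[R]_d) (b : 'I_k -> R) (p : 'rV[R]_d) : Prop :=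
  forall j : 'I_d, Pj eps y a b j (p ord0 j).

(* Main.v *)
Require Import Defs.
From HB Require Import structures.
From mathcomp Require Import all_boot all_order all_algebra.
From mathcomp Require Import reals.
From mathcomp Require Import lra.
Import Order.TTheory GRing.Theory Num.Theory.
Local Open Scope ring_scope.

Section Aux.
Variables (R : realType) (k : nat) (A B : 'I_k -> R) (y eps : R).

Definition cand (x : 'I_k * bool) : R := A x.1 + (if x.2 then B x.1 else - B x.1).
Definition inI (c : R) : bool := (y - eps <= c) && (c <= y + eps).

Definition pick1 (t : R) : R :=
  match [pick x | inI (cand x)] with
  | Some x0 => cand (Order.arg_min x0 (fun x => inI (cand x)) (fun x => `|t - cand x|))
  | None => y end.

Lemma pick1P t : `|t - y| <= eps ->
  inI (pick1 t) /\ (forall i, B i <= `|t - A i| -> B i <= `|pick1 t - A i|).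
Proof.
move=> /[dup] Hty; rewrite ler_norml => /andP[Ht1 Ht2].
rewrite /pick1; case: pickP => [x0 Hx0 | Hn].
  case: arg_minP => // x Hx Hmin; split => // i Hi.
  move: Hx Hmin; set c := cand x => Hx Hmin.
  move: Hx; rewrite /inI => /andP[H1 H2].
  rewrite leNgt; apply/negP => Hc.
  move: Hc; rewrite ltr_norml => /andP[Hc1 Hc2].
  move: Hi; rewrite ler_normr => /orP[Hi|Hi].
  - have Hin : inI (cand (i, true)).
      rewrite /inI /cand /=; apply/andP; split; lra.
    have := Hmin _ Hin; rewrite /cand /=.
    have -> : `|t - c| = t - c by apply/ger0_norm; lra.
    have -> : `|t - (A i + B i)| = t - (A i + B i) by apply/ger0_norm; lra.
    lra.
  - have Hin : inI (cand (i, false)).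
      rewrite /inI /cand /=; apply/andP; split; lra.
    have := Hmin _ Hin; rewrite /cand /=.
    have -> : `|t - c| = c - t by rewrite distrC; apply/ger0_norm; lra.
    have -> : `|t - (A i - B i)| = A i - B i - t by rewrite distrC; apply/ger0_norm; lra.
    lra.
split; first by rewrite /inI; apply/andP; split; lra.
move=> i Hi; rewrite leNgt; apply/negP => Hc.
move: Hc; rewrite ltr_norml => /andP[Hc1 Hc2].
move: Hi; rewrite ler_normr => /orP[Hi|Hi].
- have := Hn (i, true); rewrite /inI /cand /=.
  have -> : y - eps <= A i + B i by lra.
  have -> : A i + B i <= y + eps by lra.
  by [].
- have := Hn (i, false); rewrite /inI /cand /=.
  have -> : y - eps <= A i - B i by lra.
  have -> : A i - B i <= y + eps by lra.
  by [].
Qed.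
End Aux.
Lemma infnorm_ge (R : realType) d (v : 'rV[R]_d) j : `|v ord0 j| <= infnorm v.
Proof. by rewrite /infnorm (bigD1 j) //= le_max lexx. Qed.

Lemma infnorm_le (R : realType) d (v : 'rV[R]_d) e :
  0 <= e -> (forall j, `|v ord0 j| <= e) -> infnorm v <= e.
Proof. move=> He H; rewrite /infnorm; elim/big_ind: _ => //= x z Hx Hz; by rewrite ge_max Hx Hz. Qed.

Lemma infnorm_lt (R : realType) d (v : 'rV[R]_d) e :
  0 < e -> (forall j, `|v ord0 j| < e) -> infnorm v < e.
Proof. move=> He H; rewrite /infnorm; elim/big_ind: _ => //= x z Hx Hz; by rewrite gt_max Hx Hz. Qed.

Theorem lemma4 (R : realType) (d k : nat) (eps : R) (y : 'rV[R]_d)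
  (a : 'I_k -> 'rV[R]_d) (b : 'I_k -> R) :
  0 < eps -> (forall i : 'I_k, 0 < b i) ->
  (forall yt : 'rV[R]_d,
     infnorm (yt - y) <= eps ->
     \bigcup_(j < d) Sj a b j (yt ord0 j) = [set: 'I_k] ->
     feasible eps y a b yt)
  /\
  ((exists yt : 'rV[R]_d, feasible eps y a b yt) ->
   exists p : 'rV[R]_d, inP eps y a b p /\ feasible eps y a b p).
Proof.
move=> Heps Hb; split.
  move=> yt Hn HU; split => // i.
  have : i \in \bigcup_(j < d) Sj a b j (yt ord0 j) by rewrite HU inE.
  case/bigcupP => j _; rewrite inE => Hj.
  apply: (le_trans Hj); have := (@infnorm_ge _ _ (yt - a i) j); by rewrite !mxE.
case=> yt [Hn Hf].
pose A (j : 'I_d) (i : 'I_k) : R := a i ord0 j.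
pose p := \row_j @pick1 R k (A j) b (y ord0 j) eps (yt ord0 j).
have Hj j : `|yt ord0 j - y ord0 j| <= eps.
  by have := (@infnorm_ge _ _ (yt - y) j); rewrite !mxE => H; apply: le_trans H Hn.
exists p; split.
  move=> j; rewrite /p mxE /Pj /Pj_raw /pick1.
  case: pickP => [x0 Hx0 | Hn0].
    left; case: arg_minP => // x Hx _.
    exists x.1; move: Hx; rewrite /cand /inI => /andP[H1 H2]; split; last by apply/andP.
    by case: x.2; [right|left].
  right; split => // q [i [Hq Hq']].
  case: Hq => Hq.
  - by have := Hn0 (i, false); rewrite /inI /cand /= -Hq Hq'.
  - by have := Hn0 (i, true); rewrite /inI /cand /= -Hq Hq'.
split.
  apply: infnorm_le; first exact: ltW.
  move=> j; have [H1 _] := @pick1P R k (A j) b _ _ _ (Hj j).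
  move: H1; rewrite /inI !mxE => /andP[H1 H2].
  rewrite ler_norml; apply/andP; split; lra.
move=> i.
case: (boolP [exists j, b i <= `|yt ord0 j - a i ord0 j|]) => [/existsP [j Hij] | /existsPn H].
  have [_ H2] := @pick1P R k (A j) b _ _ _ (Hj j).
  apply: (le_trans (H2 i Hij)); have := (@infnorm_ge _ _ (p - a i) j); by rewrite !mxE.
exfalso; have := Hf i; apply/negP; rewrite -ltNge; apply: infnorm_lt => // j.
by rewrite !mxE ltNge; apply: H.
Qed.
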